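(* Let $K$ be finite with $|K|\ge2$, let $f^{\mathcal{W}}:\mathcal{P}^n\to 2^K$ be a voting by committees, and let $i\in N$. Then $S\in V_i$ if and only if there is $k^\star\in K$ such that either (i) $k^\star\in S$ and $i\in\bigcap_{M\in\mathcal{W}_{k^\star}}M$, or (ii) $k^\star\notin S$ and $\{i\}\in\mathcal{W}_{k^\star}$.
   Context: $N=\{1,\dots,n\}$, $n\ge2$; alternatives are subsets of $K$; $\mathcal{P}$ all strict linear orders on $2^K$; $t(P_i)$ the top of $P_i$. A committee for $k$ is a non-empty set $\mathcal{W}_k$ of non-empty subsets of $N$ closed under supersets. $f^{\mathcal{W}}$: $k\in f^{\mathcal{W}}(P)$ iff $\{j\in N:k\in t(P_j)\}\in\mathcal{W}_k$. Option set $O(P_i)=\{f^{\mathcal{W}}(P_i,P_{-i}):P_{-i}\in\mathcal{P}^{n-1}\}$. Agent $i$ vetoes $S\in 2^K$ via $P_i$ if $S\notin O(P_i)$; $V_i$ is the set of alternatives $i$ vetoes via some preference. *)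

(* Defs.v *)
From mathcomp Require Import all_boot.
Set Implicit Arguments. Unset Strict Implicit. Unset Printing Implicit Defensive.

(* A (strict) preference: a strict linear order on 2^K.
   prel S T means "S is strictly preferred to T". *)
Record pref (K : finType) := Pref {
  prel : rel {set K};
  prel_irr : irreflexive prel;
  prel_trans : transitive prel;
  prel_total : forall S T, S != T -> prel S T || prel T S
}.

(* top t(P): the unique alternative preferred to every other one
   (exists for any strict linear order on the finite set 2^K). *)
Definition top (K : finType) (P : pref K) : {set K} :=
  odflt set0 [pick S : {set K} | [forall T : {set K}, (T != S) ==> prel P S T]].

Definition profile (n : nat) (K : finType) := 'I_n -> pref K.

Definition committee (n : nat) (W : {set {set 'I_n}}) : Prop :=
  W != set0 /\ (forall M, M \in W -> M != set0) /\
  (forall M M' : {set 'I_n}, M \in W -> M \subset M' -> M' \in W).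

Definition vbc (n : nat) (K : finType) (W : K -> {set {set 'I_n}})
  (P : profile n K) : {set K} :=
  [set k | [set j | k \in top (P j)] \in W k].

Definition upd (n : nat) (K : finType) (P : profile n K) (i : 'I_n) (Pi : pref K)
  : profile n K := fun j => if j == i then Pi else P j.

Definition option_set (n : nat) (K : finType) (W : K -> {set {set 'I_n}})
  (i : 'I_n) (Pi : pref K) : {set K} -> Prop :=
  fun S => exists P : profile n K, S = vbc W (upd P i Pi).

Definition vetoes (n : nat) (K : finType) (W : K -> {set {set 'I_n}})
  (i : 'I_n) (Pi : pref K) (S : {set K}) : Prop :=
  ~ option_set W i Pi S.

Definition veto_set (n : nat) (K : finType) (W : K -> {set {set 'I_n}})
  (i : 'I_n) : {set K} -> Prop :=
  fun S => exists Pi : pref K, vetoes W i Pi S.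

(* Main.v *)
Require Import Defs.
From mathcomp Require Import all_boot.

Section Aux.
Variable K : finType.
Variable T : {set K}.

Definition prT : rel {set K} := fun S U =>
  ((S == T) && (U != T)) || [&& S != T, U != T & (enum_rank S < enum_rank U)%N].

Lemma prT_irr : irreflexive prT.
Proof. by move=> S; rewrite /prT ltnn; case: (S == T); rewrite ?andbF. Qed.

Lemma prT_trans : transitive prT.
Proof.
move=> U S V; rewrite /prT.
case: (S =P T) => [->|nS]; case: (U =P T) => [->|nU]; case: (V =P T) => [->|nV] //=.
by move=> h1 h2; apply: ltn_trans h1 h2.
Qed.

Lemma prT_total S U : S != U -> prT S U || prT U S.
Proof.
rewrite /prT => nSU.
case: (boolP (S == T)) => [/eqP eS|nS]; case: (boolP (U == T)) => [/eqP eU|nU] //=.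
- by move: nSU; rewrite eS eU eqxx.
- have : enum_rank S != enum_rank U.
    by apply: contra nSU => /eqP /enum_rank_inj ->.
  by rewrite -(inj_eq val_inj) /= neq_ltn.
Qed.

Definition mkpref : pref K := Pref prT_irr prT_trans prT_total.

Lemma top_mkpref : top mkpref = T.
Proof.
rewrite /top; case: pickP => [S /forallP HS|H] /=.
- apply/eqP; apply/negPn/negP => nST.
  have := HS T; rewrite eq_sym nST /= /prT eqxx /= andbF.
  by rewrite (negbTE nST).
- have := H T; move/negbT/negP; case; apply/forallP => U; apply/implyP => nUT.
  by rewrite /= /prT eqxx nUT.
Qed.
End Aux.
Arguments mkpref {K}.
Arguments top_mkpref {K}.

Theorem lemma3 (n : nat) (K : finType) (W : K -> {set {set 'I_n}}) (i : 'I_n)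
  (S : {set K}) :
  2 <= n -> 2 <= #|K| -> (forall k, committee (W k)) ->
  (veto_set W i S <->
   exists kstar : K,
     (kstar \in S /\ (forall M, M \in W kstar -> i \in M)) \/
     (kstar \notin S /\ [set i] \in W kstar)).
Proof.
move=> _ _ Hc.
have WT : forall k, [set: 'I_n] \in W k.
  move=> k; have [/set0Pn [M HM] [_ Hs]] := Hc k.
  exact: (Hs M _ HM (subsetT M)).
have W0 : forall k, set0 \notin W k.
  by move=> k; have [_ [H0 _]] := Hc k; apply/negP => /H0; rewrite eqxx.
split.
- move=> [Pi Hv].
  set b := [exists k, ((k \in S) && [forall M, (M \in W k) ==> (i \in M)])
                   || ((k \notin S) && ([set i] \in W k))].
  case: (boolP b) => [/existsP [k] /orP [/andP [kS /forallP HM]|/andP [kS Hi]]|nb].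
  + by exists k; left; split => // M /(implyP (HM M)).
  + by exists k; right.
  exfalso; apply: Hv.
  set T := top Pi.
  pose C k : {set 'I_n} :=
    if k \in S then (if k \in T then setT else odflt set0 [pick M in W k | i \notin M])
    else (if k \in T then [set i] else set0).
  have HC : forall k, (i \in C k) = (k \in T).
    move=> k; rewrite /C; case: (k \in S); case: (k \in T);
      rewrite ?in_setT ?in_set1 ?eqxx ?in_set0 //.
    by case: pickP => [M /andP [_ /negbTE]|] //=; rewrite in_set0.
  exists (fun j => mkpref [set k | j \in C k]).
  apply/setP => k; rewrite inE.
  have -> : [set j | k \in top (upd (fun j => mkpref [set k0 | j \in C k0]) i Pi j)] = C k.
    apply/setP => j; rewrite inE /upd.
    case: (j =P i) => [->|_]; first by rewrite HC.
    by rewrite top_mkpref inE.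
  move/negP: nb => nb.
  rewrite /C; case kS: (k \in S); case kT: (k \in T); rewrite ?WT //.
  + case: pickP => [M /andP [] //|H].
    exfalso; apply: nb; apply/existsP; exists k; rewrite kS /= orbF.
    apply/forallP => M; apply/implyP => MW.
    by have := H M; rewrite MW /= => /negbFE.
  + apply/esym/negbTE/negP => Hi; apply: nb; apply/existsP; exists k.
    by rewrite kS Hi.
  + by apply/esym/negbTE.
- move=> [k [[kS HM]|[kS Hi]]].
  + exists (mkpref set0) => [[P HP]].
    move: kS; rewrite HP inE => /HM; rewrite inE /upd eqxx top_mkpref.
    by rewrite in_set0.
  + exists (mkpref setT) => [[P HP]].
    move: kS; rewrite HP inE; apply/negP/negPn.
    have [_ [_ Hs]] := Hc k; apply: (Hs _ _ Hi).
    by rewrite sub1set inE /upd eqxx top_mkpref in_setT.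
Qed.
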